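(* Let $\rho=\rho_0$ and let $R=\sum_{m,n\ge 0}\frac1{n!}\binom{\psi}{m}\phi^n\otimes(a-1)^mb^n$. Then $\rho^{\otimes2}(R)$ is a well-defined element of $\operatorname{End}(A^1)^{\otimes 2}[[\hbar]]$, and the operator $r:=\rho^{\otimes2}(R)P$, where $P$ exchanges the two arguments of a function of $(z_0,z_1)$, acts on $A^2[[\hbar]]$ by $$(rf)(z_0,z_1)=f\Big(z_1+\frac{\hbar}{1+\hbar}z_0,\ \frac{1}{1+\hbar}z_0\Big)=f(U^{\top}z),\qquad U=\begin{pmatrix}1-t&t\\1&0\end{pmatrix},\ t=\frac1{1+\hbar}.$$ In particular, for the coherent states $\varphi_v(z)=e^{v^\top z}$ ($v\in\mathbb{C}^2$) one has $r\varphi_v=\varphi_{Uv}$.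
   Context: $\rho_0\colon D(\mathsf{B}_1)\to\operatorname{End}(A^1[[\hbar]])$ is given by $a\mapsto 1+\hbar$, $b\mapsto\partial/\partial z$, $\phi\mapsto\hbar z$, $\psi\mapsto -z\,\partial/\partial z$, $\chi_{u,v}f(z)=e^{\hbar uz}f(vz)$. $A^n$ denotes the span of functions $\mathbb{C}^n\to\mathbb{C}$ of the form $p(z)e^{u^\top z}$ with $p$ a polynomial and $u\in\mathbb{C}^n$; elements of $\mathbb{C}^n$ are column vectors. The binomial $\binom{\psi}{m}=\psi(\psi-1)\cdots(\psi-m+1)/m!$. *)

(* Defs.v *)
From Stdlib Require Import Reals Factorial List ClassicalEpsilon.
From Coquelicot Require Import Coquelicot.

Open Scope C_scope.

Definition cexp (z : C) : C :=
  (exp (fst z) * cos (snd z), exp (fst z) * sin (snd z))%R.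

Fixpoint cpow (z : C) (n : nat) : C :=
  match n with O => 1 | S k => z * cpow z k end.

Definition Cderiv (g : C -> C) (z : C) : C :=
  epsilon (inhabits (RtoC 0))
    (fun l : C => @is_derive C_AbsRing C_NormedModule g z l).

Fixpoint Cderiv_n (j : nat) (g : C -> C) : C -> C :=
  match j with O => g | S i => Cderiv (Cderiv_n i g) end.

Definition invfact (n : nat) : C := / RtoC (INR (Factorial.fact n)).

Definition taylor (j : nat) (g : C -> C) : C := Cderiv_n j g 0 * invfact j.

Definition inA1 (f : C -> C) : Prop :=
  exists l : list (C * nat * C),
    forall z, f z = fold_right
      (fun '(c, a, u) acc => c * cpow z a * cexp (u * z) + acc) 0 l.

Definition inA2 (f : C -> C -> C) : Prop :=
  exists l : list (C * nat * nat * C * C),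
    forall z0 z1, f z0 z1 = fold_right
      (fun '(c, a, b, u0, u1) acc =>
         c * cpow z0 a * cpow z1 b * cexp (u0 * z0 + u1 * z1) + acc) 0 l.

(** elements of A^1[[hbar]], A^2[[hbar]] : sequences of hbar-coefficients *)
Definition S1 := nat -> C -> C.
Definition S2 := nat -> C -> C -> C.

Definition inA2ser (G : S2) : Prop := forall k, inA2 (G k).

Definition cser (f : C -> C -> C) : S2 :=
  fun k => match k with O => f | S _ => fun _ _ => 0 end.

Definition hser (g : C -> C -> C -> C) : S2 :=
  fun j z0 z1 => taylor j (fun h => g h z0 z1).

Definition Op1 := S1 -> S1.

Definition op_id : Op1 := fun F => F.
Definition op_comp (X Y : Op1) : Op1 := fun F => X (Y F).
Definition op_sub (X Y : Op1) : Op1 := fun F k z => X F k z - Y F k z.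
Fixpoint op_pow (X : Op1) (n : nat) : Op1 :=
  match n with O => op_id | S m => op_comp X (op_pow X m) end.
Definition op_scale (c : C) (X : Op1) : Op1 := fun F k z => c * X F k z.

(** rho_0(a) = 1 + hbar *)
Definition rho_a : Op1 := fun F k =>
  match k with O => F O | S k' => fun z => F k z + F k' z end.
Definition rho_b : Op1 := fun F k z => Cderiv (F k) z.
(** rho_0(phi) = hbar z *)
Definition rho_phi : Op1 := fun F k =>
  match k with O => fun _ => 0 | S k' => fun z => z * F k' z end.
Definition rho_psi : Op1 := fun F k z => - (z * Cderiv (F k) z).

Fixpoint falling (X : Op1) (m : nat) : Op1 :=
  match m with
  | O => op_id
  | S i => fun F k z => X (falling X i F) k z - RtoC (INR i) * falling X i F k z
  end.

Definition binom_op (X : Op1) (m : nat) : Op1 := op_scale (invfact m) (falling X m).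

Definition tensor (X Y : Op1) (G : S2) : S2 :=
  let G' : S2 := fun k z0 z1 => Y (fun j w => G j z0 w) k z1 in
  fun k z0 z1 => X (fun j w => G' j w z1) k z0.

Definition Rterm (m n : nat) (G : S2) : S2 :=
  fun k z0 z1 => invfact n *
    tensor (op_comp (binom_op rho_psi m) (op_pow rho_phi n))
           (op_comp (op_pow (op_sub rho_a op_id) m) (op_pow rho_b n)) G k z0 z1.

(** rho^{(x)2}(R) : hbar-adic sum over (m,n); the hbar^N coefficient only
    receives contributions from m+n <= N (this is the well-definedness,
    stated as the first conjunct of the theorem). *)
Definition rhoR (G : S2) : S2 :=
  fun N z0 z1 => sum_n (fun m => sum_n (fun n => Rterm m n G N z0 z1) N) N.

Definition Pswap (G : S2) : S2 := fun k z0 z1 => G k z1 z0.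

Definition r_op (G : S2) : S2 := rhoR (Pswap G).

Definition t_of (h : C) : C := / (1 + h).

(** 2x2 matrices as ((U00,U01),(U10,U11)), vectors in C^2 as pairs *)
Definition Umat (h : C) : (C * C) * (C * C) :=
  ((1 - t_of h, t_of h), (RtoC 1, RtoC 0)).

Definition mv (M : (C * C) * (C * C)) (v : C * C) : C * C :=
  (fst (fst M) * fst v + snd (fst M) * snd v,
   fst (snd M) * fst v + snd (snd M) * snd v).

Definition mtv (M : (C * C) * (C * C)) (v : C * C) : C * C :=
  (fst (fst M) * fst v + fst (snd M) * snd v,
   snd (fst M) * fst v + snd (snd M) * snd v).

(** (f(U^T z)) as an element of A^2[[hbar]], for f = sum_k hbar^k f_k :
    each f_k(U(hbar)^T z) is expanded in hbar *)
Definition substU (G : S2) : S2 :=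
  fun N z0 z1 => sum_n (fun k =>
    hser (fun h w0 w1 =>
            let w := mtv (Umat h) (w0, w1) in G k (fst w) (snd w)) (N - k)%nat z0 z1) N.

Definition coh (v : C * C) : C -> C -> C :=
  fun z0 z1 => cexp (fst v * z0 + snd v * z1).

(* Main.v *)
Require Import Defs.
From Stdlib Require Import Reals Lra Lia FunctionalExtensionality ClassicalEpsilon List Factorial.
From Coquelicot Require Import Coquelicot.

Lemma Rabs_le_inv (a b : R) : Rabs a <= b -> -b <= a <= b.
Proof. unfold Rabs; destruct (Rcase_abs a); lra. Qed.

Lemma exp_est (a : R) : Rabs a <= /2 -> 0 <= exp a - 1 - a <= 2 * a^2.
Proof.
  intros Ha. apply Rabs_le_inv in Ha.
  pose proof (exp_ineq1_le a). pose proof (exp_ineq1_le (-a)).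
  assert (E : exp a * exp (-a) = 1) by (rewrite <- exp_plus; replace (a + -a) with 0 by ring; apply exp_0).
  pose proof (exp_pos a).
  assert (exp a * (1 - a) <= 1) by nra.
  split; [lra|]. nra.
Qed.

Lemma cos_est (b : R) : Rabs b <= /2 -> Rabs (cos b - 1) <= b^2 / 2.
Proof.
  intros Hb. apply Rabs_le_inv in Hb. pose proof PI2_1.
  destruct (cos_bound b 0) as [H1 _]; try lra.
  unfold cos_approx, cos_term in H1. simpl in H1.
  pose proof (COS_bound b).
  rewrite Rabs_left1; [|lra]. lra.
Qed.

Lemma sin_est_pos (b : R) : 0 <= b <= /2 -> Rabs (sin b - b) <= b^2.
Proof.
  intros Hb. pose proof PI2_1.
  destruct (sin_bound b 0) as [H1 H2]; try lra.
  unfold sin_approx, sin_term in H1, H2. simpl in H1, H2.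
  set (c3 := b * (b * (b * 1))) in *. set (c5 := b * (b * (b * (b * (b * 1))))) in *.
  assert (0 <= c3 <= b^2 / 2) by (unfold c3; nra).
  assert (E5 : c5 = b^2 * c3) by (unfold c5, c3; ring).
  assert (0 <= b^2 <= 1/4) by nra.
  assert (0 <= c5 <= b^2 / 2) by (rewrite E5; nra).
  apply Rabs_le. split; lra.
Qed.

Lemma sin_est (b : R) : Rabs b <= /2 -> Rabs (sin b - b) <= b^2.
Proof.
  intros Hb. destruct (Rle_dec 0 b).
  - apply sin_est_pos. apply Rabs_le_inv in Hb. lra.
  - replace (sin b - b) with (- (sin (-b) - (-b))) by (rewrite sin_neg; ring).
    rewrite Rabs_Ropp. replace (b^2) with ((-b)^2) by ring.
    apply sin_est_pos. apply Rabs_le_inv in Hb. lra.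
Qed.

Open Scope C_scope.

Lemma C_eq (a b : C) : fst a = fst b -> snd a = snd b -> a = b.
Proof. destruct a, b; simpl; intros; subst; reflexivity. Qed.

Lemma cexp_add (a b : C) : cexp (a + b) = cexp a * cexp b.
Proof.
  destruct a as [a1 a2], b as [b1 b2]. unfold cexp; simpl.
  rewrite exp_plus, cos_plus, sin_plus. apply C_eq; simpl; ring.
Qed.

Lemma cexp_0 : cexp 0 = 1.
Proof. unfold cexp; simpl. rewrite exp_0, cos_0, sin_0. apply C_eq; simpl; ring. Qed.

Lemma Cmod_sq (z : C) : (Cmod z ^ 2 = fst z ^ 2 + snd z ^ 2)%R.
Proof. unfold Cmod. rewrite pow2_sqrt; [reflexivity|]. nra. Qed.

Lemma Cmod_comp_le (z : C) : (Rabs (fst z) <= Cmod z /\ Rabs (snd z) <= Cmod z)%R.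
Proof. pose proof (Rmax_Cmod z). split; eapply Rle_trans; [|apply H| |apply H];
  [apply Rmax_l|apply Rmax_r]. Qed.

Lemma Cmod_le_sum (z : C) : (Cmod z <= Rabs (fst z) + Rabs (snd z))%R.
Proof.
  destruct z as [p q]. replace (p, q) with (RtoC p + (0, q)) by (apply C_eq; simpl; ring).
  eapply Rle_trans. apply Cmod_triangle. rewrite Cmod_R. simpl.
  unfold Cmod; simpl. replace (0 * (0 * 1) + q * (q * 1))%R with (Rsqr q) by (unfold Rsqr; ring).
  rewrite sqrt_Rsqr_abs. rewrite Rplus_0_r, Rplus_0_l. lra.
Qed.



Lemma deriv_by_estimate (f : C -> C) (x l : C) (d K : R) :
  (0 < d)%R -> (0 <= K)%R ->
  (forall y, (Cmod (y - x) < d)%R ->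
     (Cmod (f y - f x - (y - x) * l) <= K * (Cmod (y - x))^2)%R) ->
  @is_derive C_AbsRing C_NormedModule f x l.
Proof.
  intros Hd HK Hest. split.
  - apply is_linear_scal_l.
  - intros x' Hx'. apply (@is_filter_lim_locally_unique C_AbsRing (AbsRing_NormedModule C_AbsRing)) in Hx'. subst x'.
    intros eps.
    assert (Hr : (0 < Rmin d (eps / (K + 1)))%R).
    { apply Rmin_glb_lt; [lra|]. apply Rdiv_lt_0_compat; [apply cond_pos|lra]. }
    apply (filter_imp (fun y => ball_norm x (mkposreal _ Hr) y)).
    2: apply (@locally_ball_norm C_AbsRing (AbsRing_NormedModule C_AbsRing)).
    intros y Hy. unfold ball_norm in Hy. simpl in Hy.
    change (Cmod (f y - f x - (y - x) * l) <= eps * Cmod (y - x))%R.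
    change (Cmod (y - x) < Rmin d (eps / (K + 1)))%R in Hy.
    assert (H1 : (Cmod (y - x) < d)%R) by (eapply Rlt_le_trans; [apply Hy| apply Rmin_l]).
    assert (H2 : (Cmod (y - x) < eps / (K + 1))%R) by (eapply Rlt_le_trans; [apply Hy| apply Rmin_r]).
    eapply Rle_trans. apply Hest; auto.
    pose proof (Cmod_ge_0 (y - x)) as H0.
    pose proof (cond_pos eps).
    assert (H3 : (Cmod (y - x) * (K + 1) <= eps)%R).
    { apply Rlt_le. apply (Rmult_lt_compat_r (K+1)) in H2; [|lra].
      unfold Rdiv in H2. rewrite Rmult_assoc, Rinv_l in H2; lra. }
    simpl. nra.
Qed.

Lemma Cderiv_eq (f : C -> C) (z l : C) :
  @is_derive C_AbsRing C_NormedModule f z l -> Cderiv f z = l.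
Proof.
  intros H. unfold Cderiv.
  pose proof (epsilon_spec (inhabits (RtoC 0))
    (fun l : C => @is_derive C_AbsRing C_NormedModule f z l) (ex_intro _ l H)) as H'.
  apply is_C_derive_unique in H. apply is_C_derive_unique in H'. congruence.
Qed.

Lemma mul_bound (x y X Y : R) : (Rabs x <= X -> Rabs y <= Y -> Rabs (x * y) <= X * Y)%R.
Proof. intros. rewrite Rabs_mult. apply Rmult_le_compat; auto; apply Rabs_pos. Qed.

Lemma cexp_est (h : C) : (Cmod h <= /2)%R -> (Cmod (cexp h - 1 - h) <= 5 * Cmod h ^ 2)%R.
Proof.
  intros Hh. destruct (Cmod_comp_le h) as [Ha Hb].
  rewrite Cmod_sq. destruct h as [a b]; simpl in *.
  assert (Ha' : (Rabs a <= /2)%R) by lra. assert (Hb' : (Rabs b <= /2)%R) by lra.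
  pose proof (exp_est a Ha') as HE. pose proof (cos_est b Hb') as HC. pose proof (sin_est b Hb') as HS.
  set (E := (exp a - 1 - a)%R) in *. set (Cc := (cos b - 1)%R) in *. set (S := (sin b - b)%R) in *.
  eapply Rle_trans. apply Cmod_le_sum. unfold cexp. simpl.
  assert (Ep : exp a = (1 + a + E)%R) by (unfold E; ring).
  assert (Cp : cos b = (1 + Cc)%R) by (unfold Cc; ring).
  assert (Sp : sin b = (b + S)%R) by (unfold S; ring).
  rewrite Ep, Cp, Sp.
  assert (a2 : (a ^ 2 = Rabs a * Rabs a)%R) by (rewrite <- Rabs_mult, Rabs_right; [ring | nra]).
  assert (b2 : (b ^ 2 = Rabs b * Rabs b)%R) by (rewrite <- Rabs_mult, Rabs_right; [ring | nra]).
  assert (HEa : (Rabs E <= 2 * a^2)%R) by (rewrite Rabs_right; lra).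
  replace ((1 + a + E) * (1 + Cc) + - (1) + - a)%R with (E + ((1 + a) * Cc + E * Cc))%R by ring.
  replace ((1 + a + E) * (b + S) + - 0 + - b)%R with (S + (a + E) * (b + S))%R by ring.
  pose proof (Rabs_pos a). pose proof (Rabs_pos b).
  assert (H1 : (Rabs (1 + a) <= 3/2)%R) by (apply Rabs_le; apply Rabs_le_inv in Ha'; lra).
  assert (H2 : (Rabs (a + E) <= 2 * Rabs a)%R).
  { eapply Rle_trans. apply Rabs_triang. nra. }
  assert (H3 : (Rabs (b + S) <= 2 * Rabs b)%R).
  { eapply Rle_trans. apply Rabs_triang. nra. }
  pose proof (mul_bound _ _ _ _ H1 HC).
  pose proof (mul_bound _ _ _ _ HEa HC).
  pose proof (mul_bound _ _ _ _ H2 H3).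
  pose proof (Rabs_triang E ((1 + a) * Cc + E * Cc)).
  pose proof (Rabs_triang ((1 + a) * Cc) (E * Cc)).
  pose proof (Rabs_triang S ((a + E) * (b + S))).
  assert (X1 : (2 * a ^ 2 * (b ^ 2 / 2) <= a^2 / 4)%R).
  { assert (0 <= a^2)%R by nra. assert (b^2 <= 1/4)%R by nra. nra. }
  assert (X2 : (2 * Rabs a * (2 * Rabs b) <= 2 * a^2 + 2 * b^2)%R).
  { rewrite a2, b2. pose proof (pow2_ge_0 (Rabs a - Rabs b)). nra. }
  replace (a * (a * 1) + b * (b * 1))%R with (a ^ 2 + b ^ 2)%R by ring.
  pose proof (pow2_ge_0 a). pose proof (pow2_ge_0 b). lra.
Qed.

Lemma is_derive_cexp (z : C) : @is_derive C_AbsRing C_NormedModule cexp z (cexp z).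
Proof.
  apply (deriv_by_estimate _ _ _ (/2) (5 * Cmod (cexp z))); [lra| pose proof (Cmod_ge_0 (cexp z)); lra|].
  intros y Hy.
  replace y with (z + (y - z)) at 1 by ring. rewrite cexp_add.
  replace (cexp z * cexp (y - z) - cexp z - (y - z) * cexp z) with
    (cexp z * (cexp (y - z) - 1 - (y - z))) by ring.
  rewrite Cmod_mult. replace (5 * Cmod (cexp z) * Cmod (y - z) ^ 2)%R with (Cmod (cexp z) * (5 * Cmod (y - z) ^ 2))%R by ring. apply Rmult_le_compat_l. apply Cmod_ge_0.
  apply cexp_est. lra.
Qed.

Lemma is_derive_Cinv (w : C) : w <> 0 ->
  @is_derive C_AbsRing C_NormedModule Cinv w (- (/ w * / w)).
Proof.
  intros Hw. pose proof (proj1 (Cmod_gt_0 w) Hw) as Hm.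
  apply (deriv_by_estimate _ _ _ (Cmod w / 2) (2 / (Cmod w ^ 3))); [lra| |].
  { apply Rlt_le, Rdiv_lt_0_compat; [lra| apply pow_lt; lra]. }
  intros y Hy.
  assert (Hy2 : (Cmod w / 2 <= Cmod y)%R).
  { pose proof (Cmod_triangle y (w - y)).
    replace (y + (w - y)) with w in H by ring.
    replace (w - y) with (- (y - w)) in H by ring. rewrite Cmod_opp in H. lra. }
  assert (Hy0 : y <> 0) by (apply Cmod_gt_0; lra).
  replace (/ y - / w - (y - w) * - (/ w * / w)) with ((y - w) * (y - w) * / (w * w * y))
    by (field; split; auto).
  rewrite Cmod_mult, Cmod_mult, Cmod_inv, Cmod_mult, Cmod_mult by (repeat apply Cmult_neq_0; auto).
  set (u := Cmod (y - w)) in *. set (m := Cmod w) in *. set (n := Cmod y) in *.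
  assert (0 <= u)%R by apply Cmod_ge_0.
  replace (2 / m ^ 3 * u ^ 2)%R with (u * u * (2 / (m * m * m)))%R by (field; lra).
  apply Rmult_le_compat_l; [nra|].
  assert (Hn : (0 < n)%R) by lra.
  apply Rle_Rinv in Hy2; [| nra | nra].
  unfold Rdiv. rewrite Rinv_mult, Rinv_mult.
  replace (/ (m / 2))%R with (2 * / m)%R in Hy2 by (field; lra).
  assert (0 < / m)%R by (apply Rinv_0_lt_compat; lra).
  assert (0 < / n)%R by (apply Rinv_0_lt_compat; lra).
  rewrite Rinv_mult, Rinv_mult.
  replace (2 * (/ m * / m * / m))%R with (/ m * / m * (2 * / m))%R by ring.
  apply Rmult_le_compat_l; [nra| exact Hy2].
Qed.

Notation isD f x l := (@is_derive C_AbsRing C_NormedModule f x l).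

Notation isDA f x l := (@is_derive C_AbsRing (AbsRing_NormedModule C_AbsRing) f x l).

Lemma A2C f x l : isDA f x l -> isD f x l.
Proof. intros [H1 H2]. split.
- destruct H1 as [a b c]. split. exact a. exact b. destruct c as [M [HM HH]]. exists M. split. exact HM. intros y. specialize (HH y). exact HH.
- intros y Hy eps. specialize (H2 y Hy eps). exact H2.
Qed.

Lemma C2A f x l : isD f x l -> isDA f x l.
Proof. intros [H1 H2]. split.
- destruct H1 as [a b c]. split. exact a. exact b. destruct c as [M [HM HH]]. exists M. split. exact HM. intros y. specialize (HH y). exact HH.
- intros y Hy eps. specialize (H2 y Hy eps). exact H2.
Qed.

Ltac cring := match goal with |- ?a = ?b => change (@eq C a b) end; cbv beta; ring.

Lemma isD_eq (f : C -> C) x l l' : isD f x l -> l = l' -> isD f x l'.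
Proof. intros H <-; exact H. Qed.

Lemma isD_const (c x : C) : isD (fun _ => c) x (RtoC 0).
Proof. exact (@is_derive_const C_AbsRing C_NormedModule c x). Qed.

Lemma isD_id (x : C) : isD (fun t => t) x (RtoC 1).
Proof. apply A2C. exact (@is_derive_id C_AbsRing x). Qed.

Lemma isD_plus f g x df dg : isD f x df -> isD g x dg -> isD (fun t => f t + g t) x (df + dg).
Proof. intros. apply (@is_derive_plus C_AbsRing C_NormedModule); auto. Qed.

Lemma isD_mult f g x df dg : isD f x df -> isD g x dg ->
  isD (fun t => f t * g t) x (df * g x + f x * dg).
Proof. intros. apply A2C. apply (@is_derive_mult C_AbsRing); try apply C2A; auto. intros; apply Cmult_comm. Qed.

Lemma isD_comp (f g : C -> C) x df dg : isD f (g x) df -> isD g x dg ->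
  isD (fun t => f (g t)) x (dg * df).
Proof. intros. apply (@is_derive_comp C_AbsRing C_NormedModule); auto. apply C2A; auto. Qed.

Lemma isD_cexp (g : C -> C) x dg : isD g x dg -> isD (fun t => cexp (g t)) x (dg * cexp (g x)).
Proof. intros. apply isD_comp; auto. apply is_derive_cexp. Qed.

Lemma isD_cpow (g : C -> C) x dg (n : nat) : isD g x dg ->
  isD (fun t => cpow (g t) n) x (RtoC (INR n) * dg * cpow (g x) (n - 1)).
Proof.
  intros Hg. induction n as [|n IH].
  - cbn [cpow]. eapply isD_eq. apply isD_const. apply C_eq; simpl; ring.
  - cbn [cpow]. eapply isD_eq. apply isD_mult; eauto.
    destruct n as [|n].
    + cbn [cpow]. apply C_eq; simpl; ring.
    + replace (S (S n) - 1)%nat with (S n) by lia. replace (S n - 1)%nat with n by lia.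
      rewrite (S_INR (S n)). rewrite RtoC_plus. cbn [cpow]. cring.
Qed.

Lemma isD_scal (c : C) f x df : isD f x df -> isD (fun t => c * f t) x (c * df).
Proof. intros. eapply isD_eq. apply isD_mult; [apply isD_const|eauto]. cring. Qed.

Lemma isD_ext (f g : C -> C) x l : (forall t, f t = g t) -> isD f x l -> isD g x l.
Proof. intros. eapply (@is_derive_ext C_AbsRing C_NormedModule); eauto. Qed.

Lemma isD_opp f x df : isD f x df -> isD (fun t => - f t) x (- df).
Proof. intros H. eapply isD_eq. eapply isD_ext. 2: apply (isD_scal (-1) f x df H).
  intros t; simpl; ring. cring. Qed.

Definition mono := (C * nat * nat * C * C)%type.
Definition mev (m : mono) (x y : C) : C :=
  match m with (c, a, b, u0, u1) => c * cpow x a * cpow y b * cexp (u0 * x + u1 * y) end.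
Definition ev2 (l : list mono) (x y : C) : C := fold_right (fun m acc => mev m x y + acc) 0 l.

Lemma ev2_nil x y : ev2 nil x y = 0. Proof. reflexivity. Qed.
Lemma ev2_cons m l x y : ev2 (m :: l) x y = mev m x y + ev2 l x y. Proof. reflexivity. Qed.
Lemma ev2_app l1 l2 x y : ev2 (l1 ++ l2) x y = ev2 l1 x y + ev2 l2 x y.
Proof. induction l1; simpl. ring. unfold ev2 in *; simpl. rewrite IHl1. ring. Qed.

Lemma inA2_ev2 f : inA2 f <-> exists l, forall x y, f x y = ev2 l x y.
Proof.
  assert (E : forall (l : list mono) x y, fold_right
      (fun '(c, a, b, u0, u1) acc =>
         c * cpow x a * cpow y b * cexp (u0 * x + u1 * y) + acc) 0 l = ev2 l x y).
  { induction l as [|[[[[c a] b] u0] u1] l IH]; intros; simpl; auto. rewrite IH. reflexivity. }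
  split; intros [l Hl]; exists l; intros; rewrite Hl; auto.
Qed.

Definition dXm (m : mono) : list mono :=
  match m with (c, a, b, u0, u1) => (c * INR a, (a - 1)%nat, b, u0, u1) :: (c * u0, a, b, u0, u1) :: nil end.
Definition dYm (m : mono) : list mono :=
  match m with (c, a, b, u0, u1) => (c * INR b, a, (b - 1)%nat, u0, u1) :: (c * u1, a, b, u0, u1) :: nil end.
Definition dXl (l : list mono) := flat_map dXm l.
Definition dYl (l : list mono) := flat_map dYm l.

Lemma isD_ev2 l (X Y : C -> C) h X' Y' : isD X h X' -> isD Y h Y' ->
  isD (fun t => ev2 l (X t) (Y t)) h (X' * ev2 (dXl l) (X h) (Y h) + Y' * ev2 (dYl l) (X h) (Y h)).
Proof.
  intros HX HY. induction l as [|[[[[c a] b] u0] u1] l IH].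
  - eapply isD_eq. eapply isD_ext with (f := fun _ => RtoC 0). intros; reflexivity. apply isD_const. simpl. cring.
  - eapply isD_eq. eapply isD_ext. 2: apply isD_plus; [|apply IH]. intros; reflexivity.
    + apply isD_mult; [apply isD_mult; [apply isD_mult|]|].
      * apply isD_const.
      * apply isD_cpow; eauto.
      * apply isD_cpow; eauto.
      * apply isD_cexp. apply isD_plus; apply isD_scal; eauto.
    + unfold dXl, dYl. simpl flat_map. rewrite !ev2_cons. unfold mev. cring.
Qed.

Lemma Cderiv_sx l x y : Cderiv (fun w => ev2 l w y) x = ev2 (dXl l) x y.
Proof.
  apply Cderiv_eq. eapply isD_eq. apply (isD_ev2 l (fun t => t) (fun _ => y)); [apply isD_id| apply isD_const].
  cring.
Qed.

Lemma Cderiv_sy l x y : Cderiv (fun w => ev2 l x w) y = ev2 (dYl l) x y.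
Proof.
  apply Cderiv_eq. eapply isD_eq. apply (isD_ev2 l (fun _ => x) (fun t => t)); [apply isD_const| apply isD_id].
  cring.
Qed.

Definition Fn := C -> C -> C.
Definition Good (f : Fn) : Prop := exists l, f = ev2 l.

Definition opA (f : Fn) : Fn := fun x y => y * Cderiv (fun w => f w y) x.
Definition opB (f : Fn) : Fn := fun x y => - (y * Cderiv (fun w => f x w) y).
Definition opD (f : Fn) : Fn := fun x y => opA f x y + opB f x y.

Fixpoint fallF (X : Fn -> Fn) (n : nat) (f : Fn) : Fn :=
  match n with
  | O => f
  | S i => fun x y => X (fallF X i f) x y - RtoC (INR i) * fallF X i f x y
  end.

Fixpoint Apow (n : nat) (f : Fn) : Fn :=
  match n with O => f | S i => opA (Apow i f) end.

Definition scl (k : C) (l : list mono) : list mono :=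
  map (fun m => match m with (c, a, b, u0, u1) => (k * c, a, b, u0, u1) end) l.
Definition mulY (l : list mono) : list mono :=
  map (fun m => match m with (c, a, b, u0, u1) => (c, a, S b, u0, u1) end) l.

Lemma ev2_scl k l x y : ev2 (scl k l) x y = k * ev2 l x y.
Proof. induction l as [|[[[[c a] b] u0] u1] l IH]; simpl. ring. unfold ev2 in *; simpl. rewrite IH. ring. Qed.

Lemma ev2_mulY l x y : ev2 (mulY l) x y = y * ev2 l x y.
Proof. induction l as [|[[[[c a] b] u0] u1] l IH]; simpl. ring. unfold ev2 in *; simpl. rewrite IH. ring. Qed.

Lemma Good_ev2 l : Good (ev2 l). Proof. exists l; reflexivity. Qed.

Lemma Good_add f g : Good f -> Good g -> Good (fun x y => f x y + g x y).
Proof. intros [l1 ->] [l2 ->]. exists (l1 ++ l2). apply functional_extensionality; intros x;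
  apply functional_extensionality; intros y. rewrite ev2_app; reflexivity. Qed.

Lemma Good_scal k f : Good f -> Good (fun x y => k * f x y).
Proof. intros [l ->]. exists (scl k l). apply functional_extensionality; intros x;
  apply functional_extensionality; intros y. rewrite ev2_scl; reflexivity. Qed.

Lemma Good_sub f g k : Good f -> Good g -> Good (fun x y => f x y - k * g x y).
Proof. intros Hf Hg. assert (Good (fun x y => f x y + (-k) * g x y)).
  { apply Good_add; auto. apply Good_scal; auto. }
  replace (fun x y => f x y - k * g x y) with (fun x y => f x y + (-k) * g x y); auto.
  apply functional_extensionality; intros x; apply functional_extensionality; intros y; ring. Qed.

Lemma Good_zero : Good (fun _ _ => 0).
Proof. exists nil. reflexivity. Qed.

Lemma opA_ev2 l : opA (ev2 l) = ev2 (mulY (dXl l)).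
Proof. apply functional_extensionality; intros x; apply functional_extensionality; intros y.
  unfold opA. rewrite Cderiv_sx, ev2_mulY. reflexivity. Qed.

Lemma opB_ev2 l : opB (ev2 l) = ev2 (scl (-1) (mulY (dYl l))).
Proof. apply functional_extensionality; intros x; apply functional_extensionality; intros y.
  unfold opB. rewrite Cderiv_sy, ev2_scl, ev2_mulY. ring. Qed.

Lemma Good_A f : Good f -> Good (opA f).
Proof. intros [l ->]. rewrite opA_ev2. apply Good_ev2. Qed.
Lemma Good_B f : Good f -> Good (opB f).
Proof. intros [l ->]. rewrite opB_ev2. apply Good_ev2. Qed.
Lemma Good_D f : Good f -> Good (opD f).
Proof. intros Hf. unfold opD. apply Good_add; [apply Good_A|apply Good_B]; auto. Qed.

Lemma Good_fall X n f : (forall g, Good g -> Good (X g)) -> Good f -> Good (fallF X n f).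
Proof. intros HX Hf. induction n; simpl; auto. apply Good_sub; auto. Qed.

Lemma Good_Apow n f : Good f -> Good (Apow n f).
Proof. intros Hf. induction n; simpl; auto. apply Good_A; auto. Qed.

Lemma Good_dx f x y : Good f -> isD (fun w => f w y) x (Cderiv (fun w => f w y) x).
Proof. intros [l ->]. rewrite Cderiv_sx. eapply isD_eq.
  apply (isD_ev2 l (fun t => t) (fun _ => y)); [apply isD_id| apply isD_const]. cring. Qed.

Lemma Good_dy f x y : Good f -> isD (fun w => f x w) y (Cderiv (fun w => f x w) y).
Proof. intros [l ->]. rewrite Cderiv_sy. eapply isD_eq.
  apply (isD_ev2 l (fun _ => x) (fun t => t)); [apply isD_const| apply isD_id]. cring. Qed.

Lemma opA_lin f g k : Good f -> Good g ->
  opA (fun x y => f x y + k * g x y) = fun x y => opA f x y + k * opA g x y.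
Proof.
  intros Hf Hg. apply functional_extensionality; intros x; apply functional_extensionality; intros y.
  unfold opA. rewrite (Cderiv_eq _ _ (Cderiv (fun w => f w y) x + k * Cderiv (fun w => g w y) x)).
  ring. apply isD_plus. apply Good_dx; auto. apply isD_scal. apply Good_dx; auto.
Qed.

Lemma opB_lin f g k : Good f -> Good g ->
  opB (fun x y => f x y + k * g x y) = fun x y => opB f x y + k * opB g x y.
Proof.
  intros Hf Hg. apply functional_extensionality; intros x; apply functional_extensionality; intros y.
  unfold opB. rewrite (Cderiv_eq _ _ (Cderiv (fun w => f x w) y + k * Cderiv (fun w => g x w) y)).
  ring. apply isD_plus. apply Good_dy; auto. apply isD_scal. apply Good_dy; auto.
Qed.

Lemma opD_lin f g k : Good f -> Good g ->
  opD (fun x y => f x y + k * g x y) = fun x y => opD f x y + k * opD g x y.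
Proof.
  intros Hf Hg. unfold opD. rewrite opA_lin, opB_lin by auto.
  apply functional_extensionality; intros x; apply functional_extensionality; intros y. ring.
Qed.

Lemma dXl_app l1 l2 : dXl (l1 ++ l2) = dXl l1 ++ dXl l2.
Proof. apply flat_map_app. Qed.
Lemma dYl_app l1 l2 : dYl (l1 ++ l2) = dYl l1 ++ dYl l2.
Proof. apply flat_map_app. Qed.

Lemma mixed l x y : ev2 (dXl (dYl l)) x y = ev2 (dYl (dXl l)) x y.
Proof.
  induction l as [|m l IH]; [reflexivity|].
  change (dYl (m :: l)) with (dYm m ++ dYl l). change (dXl (m :: l)) with (dXm m ++ dXl l).
  rewrite dXl_app, dYl_app, !ev2_app, IH. f_equal.
  destruct m as [[[[c a] b] u0] u1]. simpl. unfold ev2; simpl. ring.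
Qed.

Lemma isD_sx l x y : isD (fun w => ev2 l w y) x (ev2 (dXl l) x y).
Proof. rewrite <- Cderiv_sx. apply Good_dx. apply Good_ev2. Qed.
Lemma isD_sy l x y : isD (fun w => ev2 l x w) y (ev2 (dYl l) x y).
Proof. rewrite <- Cderiv_sy. apply Good_dy. apply Good_ev2. Qed.

Ltac fext := apply functional_extensionality; intros ?x; apply functional_extensionality; intros ?y.

Lemma comm_AB f : Good f -> opA (opB f) = fun x y => opB (opA f) x y + opA f x y.
Proof.
  intros [l ->]. fext.
  unfold opA at 1. unfold opB at 2.
  assert (E1 : (fun w => opB (ev2 l) w y) = fun w => - (y * ev2 (dYl l) w y)).
  { apply functional_extensionality; intros w. unfold opB. rewrite Cderiv_sy. reflexivity. }
  assert (E2 : (fun w => opA (ev2 l) x w) = fun w => w * ev2 (dXl l) x w).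
  { apply functional_extensionality; intros w. unfold opA. rewrite Cderiv_sx. reflexivity. }
  rewrite E1, E2.
  rewrite (Cderiv_eq _ _ (- (y * ev2 (dXl (dYl l)) x y))).
  rewrite (Cderiv_eq _ _ (1 * ev2 (dXl l) x y + y * ev2 (dYl (dXl l)) x y)).
  unfold opA. rewrite Cderiv_sx. rewrite mixed. ring.
  - eapply isD_eq. apply isD_mult. apply isD_id. apply isD_sy. reflexivity.
  - apply isD_opp. apply isD_scal. apply isD_sx.
Qed.

Lemma sub_as_add (f g : Fn) k : (fun x y => f x y - k * g x y) = (fun x y => f x y + (-k) * g x y).
Proof. fext. ring. Qed.

Lemma opA_sub f g k : Good f -> Good g ->
  opA (fun x y => f x y - k * g x y) = fun x y => opA f x y - k * opA g x y.
Proof. intros. rewrite sub_as_add, opA_lin by auto. fext. ring. Qed.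
Lemma opB_sub f g k : Good f -> Good g ->
  opB (fun x y => f x y - k * g x y) = fun x y => opB f x y - k * opB g x y.
Proof. intros. rewrite sub_as_add, opB_lin by auto. fext. ring. Qed.
Lemma opD_sub f g k : Good f -> Good g ->
  opD (fun x y => f x y - k * g x y) = fun x y => opD f x y - k * opD g x y.
Proof. intros. rewrite sub_as_add, opD_lin by auto. fext. ring. Qed.

Lemma GB : forall g, Good g -> Good (opB g). Proof. apply Good_B. Qed.
Lemma GD : forall g, Good g -> Good (opD g). Proof. apply Good_D. Qed.

Lemma RINR_S n : RtoC (INR (S n)) = RtoC (INR n) + 1.
Proof. rewrite S_INR, RtoC_plus. reflexivity. Qed.

Lemma A_fallB m g : Good g ->
  opA (fallF opB (S m) g) = fun x y => fallF opB (S m) (opA g) x y + RtoC (INR (S m)) * fallF opB m (opA g) x y.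
Proof.
  intros Hg. induction m as [|m IH].
  - simpl fallF. rewrite opA_sub by (auto using Good_B). rewrite comm_AB by auto. fext.
    simpl INR. ring.
  - change (fallF opB (S (S m)) g) with (fun x y => opB (fallF opB (S m) g) x y - RtoC (INR (S m)) * fallF opB (S m) g x y).
    assert (GF : Good (fallF opB (S m) g)) by (apply Good_fall; auto; apply GB).
    rewrite opA_sub by (auto using Good_B). rewrite comm_AB by auto. rewrite IH.
    assert (GA : Good (opA g)) by (apply Good_A; auto).
    rewrite opB_lin by (apply Good_fall; auto; apply GB).
    fext. cbn [fallF]. rewrite !RINR_S. ring.
Qed.

Fixpoint csum (f : nat -> C) (n : nat) : C :=
  match n with O => f O | S k => csum f k + f (S k) end.

Lemma csum_ext (f g : nat -> C) n : (forall i, (i <= n)%nat -> f i = g i) -> csum f n = csum g n.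
Proof. induction n; intros H; simpl. - apply H; lia. - rewrite IHn by (intros; apply H; lia). rewrite H by lia. reflexivity. Qed.

Lemma csum_plus (f g : nat -> C) n : csum (fun i => f i + g i) n = csum f n + csum g n.
Proof. induction n; simpl; auto. rewrite IHn. ring. Qed.

Lemma csum_minus (f g : nat -> C) n : csum (fun i => f i - g i) n = csum f n - csum g n.
Proof. induction n; simpl; auto. rewrite IHn. ring. Qed.

Lemma csum_scal k (f : nat -> C) n : csum (fun i => k * f i) n = k * csum f n.
Proof. induction n; simpl; auto. rewrite IHn. ring. Qed.

Lemma csum_shift (f : nat -> C) n : csum f (S n) = f O + csum (fun i => f (S i)) n.
Proof. induction n; simpl; auto. simpl in IHn. rewrite IHn. ring. Qed.

Lemma csum_zero (f : nat -> C) n : (forall i, (i <= n)%nat -> f i = 0) -> csum f n = 0.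
Proof. intros H. rewrite (csum_ext f (fun _ => 0)) by (intros; apply H; auto). clear H. induction n; simpl; auto. rewrite IHn; ring. Qed.

Lemma csum_sum_n (f : nat -> C) n : sum_n f n = csum f n.
Proof. induction n. rewrite sum_O. reflexivity. rewrite sum_Sn, IHn. reflexivity. Qed.

Lemma csum_switch (f : nat -> nat -> C) n m :
  csum (fun i => csum (fun j => f i j) m) n = csum (fun j => csum (fun i => f i j) n) m.
Proof.
  induction n; simpl; auto. rewrite IHn. rewrite <- csum_plus. reflexivity.
Qed.

Lemma csum_rev (f : nat -> C) n : csum f n = csum (fun i => f (n - i)%nat) n.
Proof.
  induction n. reflexivity.
  rewrite (csum_shift (fun i => f (S n - i)%nat)).
  change (csum f (S n)) with (csum f n + f (S n)). rewrite IHn.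
  replace (S n - 0)%nat with (S n) by lia.
  rewrite Cplus_comm. f_equal.
Qed.

Lemma csum_extend (f : nat -> C) A B : (A <= B)%nat ->
  csum f A = csum (fun i => if Nat.leb i A then f i else 0) B.
Proof.
  intros HAB. induction HAB.
  - apply csum_ext. intros i Hi. apply Nat.leb_le in Hi. rewrite Hi. reflexivity.
  - cbn [csum]. rewrite IHHAB. assert (E : Nat.leb (S m) A = false) by (apply Nat.leb_gt; lia).
    rewrite E. ring.
Qed.

Lemma INR_fact_nz n : RtoC (INR (fact n)) <> 0.
Proof. intros H. apply RtoC_inj in H. pose proof (lt_0_INR _ (lt_O_fact n)). lra. Qed.

Lemma invfact_S n : invfact (S n) * RtoC (INR (S n)) = invfact n.
Proof.
  unfold invfact. change (fact (S n)) with (S n * fact n)%nat. rewrite mult_INR, RtoC_mult.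
  assert (RtoC (INR (S n)) <> 0).
  { intros H. apply RtoC_inj in H. pose proof (lt_0_INR (S n) (Nat.lt_0_succ n)). lra. }
  pose proof (INR_fact_nz n). field. auto.
Qed.

Definition cc m n := invfact m * invfact n.

Lemma cc_Sl m n : cc (S m) n * RtoC (INR (S m)) = cc m n.
Proof. unfold cc. rewrite <- (invfact_S m). ring. Qed.
Lemma cc_Sr m n : cc m (S n) * RtoC (INR (S n)) = cc m n.
Proof. unfold cc. rewrite <- (invfact_S n). ring. Qed.

Lemma comb (P : nat -> nat -> C) M :
  csum (fun m => cc m (M - m)%nat * (P m (S (M - m)%nat) + RtoC (INR m) * P (m - 1)%nat (S (M - m)%nat)
      + P (S m) (M - m)%nat - RtoC (INR (M - m)%nat) * P m (M - m)%nat)) M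
  = RtoC (INR (S M)) * csum (fun m => cc m (S M - m)%nat * P m (S M - m)%nat) (S M).
Proof.
  set (T1 := fun m => cc m (M - m)%nat * P m (S (M - m)%nat)).
  set (T2 := fun m => cc m (M - m)%nat * RtoC (INR m) * P (m - 1)%nat (S (M - m)%nat)).
  set (T3 := fun m => cc m (M - m)%nat * P (S m) (M - m)%nat).
  set (T4 := fun m => cc m (M - m)%nat * RtoC (INR (M - m)%nat) * P m (M - m)%nat).
  rewrite (csum_ext _ (fun m => T1 m + T2 m + T3 m - T4 m)) by (intros; unfold T1, T2, T3, T4; ring).
  rewrite csum_minus, !csum_plus.
  rewrite <- csum_scal.
  rewrite (csum_ext (fun i => RtoC (INR (S M)) * (cc i (S M - i)%nat * P i (S M - i)%nat)) (fun m => RtoC (INR m) * (cc m (S M - m)%nat * P m (S M - m)%nat) +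
                               RtoC (INR (S M - m)%nat) * (cc m (S M - m)%nat * P m (S M - m)%nat))).
  2: { intros i Hi. rewrite <- Cmult_plus_distr_r. rewrite <- RtoC_plus, <- plus_INR.
       replace (i + (S M - i))%nat with (S M) by lia. reflexivity. }
  rewrite csum_plus.
  assert (R1 : csum (fun m => RtoC (INR m) * (cc m (S M - m)%nat * P m (S M - m)%nat)) (S M) = csum T3 M).
  { rewrite csum_shift. change (INR 0) with 0%R. rewrite Cmult_0_l, Cplus_0_l.
    apply csum_ext. intros i Hi. unfold T3. simpl (S M - S i)%nat.
    rewrite <- (cc_Sl i (M - i)). ring. }
  assert (R2 : csum (fun m => RtoC (INR (S M - m)%nat) * (cc m (S M - m)%nat * P m (S M - m)%nat)) (S M) = csum T1 M).
  { cbn [csum]. rewrite Nat.sub_diag. change (INR 0) with 0%R. rewrite Cmult_0_l, Cplus_0_r.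
    apply csum_ext. intros i Hi. unfold T1. replace (S M - i)%nat with (S (M - i)) by lia.
    rewrite <- (cc_Sr i (M - i)). ring. }
  assert (R3 : csum T2 M = csum T4 M).
  { destruct M as [|K].
    - simpl. unfold T2, T4. simpl INR. ring.
    - rewrite csum_shift. unfold T2 at 1. change (INR 0) with 0%R. rewrite Cmult_0_r, Cmult_0_l, Cplus_0_l.
      cbn [csum]. unfold T4 at 2. rewrite Nat.sub_diag. change (INR 0) with 0%R. rewrite Cmult_0_r, Cmult_0_l, Cplus_0_r.
      apply csum_ext. intros i Hi. unfold T2, T4. simpl (S K - S i)%nat. simpl (S i - 1)%nat.
      rewrite Nat.sub_0_r. replace (S K - i)%nat with (S (K - i)) by lia.
      rewrite (cc_Sl i (K - i)), (cc_Sr i (K - i)). reflexivity. }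
  rewrite R1, R2, R3. ring.
Qed.

Lemma opD_scal k g : Good g -> opD (fun x y => k * g x y) = fun x y => k * opD g x y.
Proof.
  intros Hg. transitivity (opD (fun x y => (fun _ _ => 0) x y + k * g x y)).
  { f_equal. fext. ring. }
  rewrite opD_lin by (auto using Good_zero). fext.
  unfold opD, opA, opB. rewrite !Cderiv_eq with (l := RtoC 0) by apply isD_const. ring.
Qed.

Lemma Good_csum (k : nat -> C) (F : nat -> Fn) n : (forall m, Good (F m)) ->
  Good (fun x y => csum (fun m => k m * F m x y) n).
Proof.
  intros HF. induction n; simpl.
  - apply Good_scal; auto.
  - apply Good_add; auto. apply Good_scal; auto.
Qed.

Lemma opD_csum (k : nat -> C) (F : nat -> Fn) n : (forall m, Good (F m)) ->
  opD (fun x y => csum (fun m => k m * F m x y) n) = fun x y => csum (fun m => k m * opD (F m) x y) n.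
Proof.
  intros HF. induction n.
  - simpl. apply opD_scal; auto.
  - change (fun x y => csum (fun m => k m * F m x y) (S n)) with
      (fun x y => (fun x y => csum (fun m => k m * F m x y) n) x y + k (S n) * F (S n) x y).
    rewrite opD_lin by (auto using Good_csum). rewrite IHn. reflexivity.
Qed.

Definition Phi (f : Fn) m n := fallF opB m (Apow n f).

Lemma Good_Phi f m n : Good f -> Good (Phi f m n).
Proof. intros. unfold Phi. apply Good_fall. apply GB. apply Good_Apow; auto. Qed.

Lemma DPhi f m n x y : Good f ->
  opD (Phi f m n) x y = Phi f m (S n) x y + RtoC (INR m) * Phi f (m - 1)%nat (S n) x y
     + Phi f (S m) n x y + RtoC (INR m) * Phi f m n x y.
Proof.
  intros Hf. unfold opD. unfold Phi at 5. cbn [fallF].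
  assert (HA : opA (Phi f m n) x y = Phi f m (S n) x y + RtoC (INR m) * Phi f (m - 1)%nat (S n) x y).
  { destruct m as [|m].
    - unfold Phi; simpl. change (INR 0) with 0%R. ring.
    - unfold Phi. rewrite A_fallB by (apply Good_Apow; auto). simpl Apow.
      replace (S m - 1)%nat with m by lia. reflexivity. }
  rewrite HA. fold (Phi f m n). ring.
Qed.

Definition factC n := RtoC (INR (fact n)).

Lemma fall_id (f : Fn) M : Good f ->
  fallF opD M f = fun x y => factC M * csum (fun m => cc m (M - m)%nat * Phi f m (M - m)%nat x y) M.
Proof.
  intros Hf. induction M as [|M IH].
  - fext. cbn [fallF csum]. unfold factC, cc, invfact, Phi. cbn [fallF Apow fact].
    simpl (0 - 0)%nat. cbn [Apow fact]. change (INR 1) with 1%R.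
    replace (/ RtoC 1) with (RtoC 1) by (apply C_eq; simpl; field). ring.
  - cbn [fallF]. rewrite IH.
    rewrite opD_scal by (apply Good_csum; intros; apply Good_Phi; auto).
    rewrite opD_csum by (intros; apply Good_Phi; auto).
    fext.
    pose proof (comb (fun m n => Phi f m n x y) M) as K. cbv beta in K.
    assert (E : csum (fun m => cc m (M - m)%nat * opD (fun x0 y0 => Phi f m (M - m)%nat x0 y0) x y) M
       - RtoC (INR M) * csum (fun m => cc m (M - m)%nat * Phi f m (M - m)%nat x y) M
       = csum (fun m => cc m (M - m)%nat * (Phi f m (S (M - m)) x y + RtoC (INR m) * Phi f (m - 1)%nat (S (M - m)) x y
      + Phi f (S m) (M - m)%nat x y - RtoC (INR (M - m)%nat) * Phi f m (M - m)%nat x y)) M).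
    { rewrite <- csum_scal, <- csum_minus. apply csum_ext. intros i Hi.
      change (opD (fun x0 y0 => Phi f i (M - i)%nat x0 y0) x y) with (opD (Phi f i (M - i)%nat) x y).
      rewrite DPhi by auto. rewrite minus_INR by lia. rewrite RtoC_minus. ring. }
    unfold factC. change (fact (S M)) with (S M * fact M)%nat. rewrite mult_INR, RtoC_mult.
    rewrite (Cmult_comm (RtoC (INR (S M))) (RtoC (INR (fact M)))), <- Cmult_assoc, <- K, <- E.
    ring.
Qed.

Lemma isD_t h : 1 + h <> 0 -> isD t_of h (- (t_of h * t_of h)).
Proof.
  intros H. unfold t_of. eapply isD_eq.
  apply (isD_comp Cinv (fun h => 1 + h)). apply is_derive_Cinv; auto.
  eapply isD_eq. apply isD_plus. apply isD_const. apply isD_id. reflexivity.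
  cring.
Qed.

Section Taylor.
Variables z0 z1 : C.
Definition Xf (h : C) : C := (1 - t_of h) * z0 + RtoC 1 * z1.
Definition Yf (h : C) : C := t_of h * z0 + RtoC 0 * z1.

Lemma nz_of_small h : (Cmod h < /2)%R -> 1 + h <> 0.
Proof.
  intros Hh E. pose proof (Cmod_triangle (1 + h) (- h)). replace (1 + h + - h) with (RtoC 1) in H by ring.
  rewrite E, Cmod_0, Cmod_opp, Cmod_1 in H. lra.
Qed.

Lemma isD_Xf h : 1 + h <> 0 -> isD Xf h (t_of h * t_of h * z0).
Proof.
  intros H. unfold Xf. eapply isD_eq. eapply isD_ext with (f := fun h => (1 + - t_of h) * z0 + RtoC 1 * z1).
  intros; reflexivity.
  apply isD_plus; [|apply isD_const]. apply isD_mult; [|apply isD_const].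
  apply isD_plus; [apply isD_const|]. apply isD_opp. apply isD_t; auto.
  cring.
Qed.

Lemma isD_Yf h : 1 + h <> 0 -> isD Yf h (- (t_of h * t_of h) * z0).
Proof.
  intros H. unfold Yf. eapply isD_eq.
  apply isD_plus; [|apply isD_const]. apply isD_mult; [|apply isD_const].
  apply isD_t; auto.
  cring.
Qed.

Lemma isD_F (g : Fn) h : Good g -> 1 + h <> 0 ->
  isD (fun h => g (Xf h) (Yf h)) h (t_of h * opD g (Xf h) (Yf h)).
Proof.
  intros [l ->] H. eapply isD_eq. apply isD_ev2; [apply isD_Xf | apply isD_Yf]; auto.
  unfold opD, opA, opB. rewrite Cderiv_sx, Cderiv_sy. unfold Yf. cring.
Qed.

Lemma small_loc h : (Cmod h < /2)%R ->
  @locally (AbsRing_UniformSpace C_AbsRing) h (fun h' : C_AbsRing => (Cmod h' < /2)%R).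
Proof.
  intros Hh. assert (Hr : (0 < /2 - Cmod h)%R) by lra.
  apply (filter_imp (fun y => @ball_norm C_AbsRing (AbsRing_NormedModule C_AbsRing) h (mkposreal _ Hr) y)).
  2: apply (@locally_ball_norm C_AbsRing (AbsRing_NormedModule C_AbsRing)).
  intros y Hy. unfold ball_norm in Hy. simpl in Hy.
  change (Cmod (y - h) < /2 - Cmod h)%R in Hy.
  change (C) in y. pose proof (Cmod_triangle h (y - h)). replace (h + (y - h)) with y in H by ring. lra.
Qed.

Lemma taylor_deriv (f : Fn) j : Good f -> forall h, (Cmod h < /2)%R ->
  Cderiv_n j (fun h => f (Xf h) (Yf h)) h = cpow (t_of h) j * fallF opD j f (Xf h) (Yf h).
Proof.
  intros Hf. induction j as [|j IH]; intros h Hh.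
  - simpl. ring.
  - cbn [Cderiv_n]. apply Cderiv_eq.
    assert (GF : Good (fallF opD j f)) by (apply Good_fall; auto; apply GD).
    eapply (@is_derive_ext_loc C_AbsRing C_NormedModule (fun h => cpow (t_of h) j * fallF opD j f (Xf h) (Yf h))).
    { apply (filter_imp (fun h' : C_AbsRing => (Cmod h' < /2)%R)). intros y Hy. symmetry. apply IH; auto.
      apply small_loc; auto. }
    eapply isD_eq. apply isD_mult. apply isD_cpow. apply isD_t. apply nz_of_small; auto.
    apply isD_F; auto. apply nz_of_small; auto.
    cbn [fallF]. destruct j as [|j].
    + change (INR 0) with 0%R. cbn [cpow]. cring.
    + replace (S j - 1)%nat with j by lia. cbn [cpow]. cring.
Qed.

End Taylor.

Lemma t_of_0 : t_of 0 = 1.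
Proof. unfold t_of. apply C_eq; simpl; field. Qed.

Lemma taylor_val (f : Fn) j z0 z1 : Good f ->
  taylor j (fun h => f (Xf z0 z1 h) (Yf z0 z1 h)) = fallF opD j f z1 z0 * invfact j.
Proof.
  intros Hf. unfold taylor. rewrite taylor_deriv; auto.
  2: { rewrite Cmod_0. lra. }
  unfold Xf, Yf. rewrite t_of_0.
  replace ((1 - 1) * z0 + RtoC 1 * z1) with z1 by ring.
  replace (1 * z0 + RtoC 0 * z1) with z0 by ring.
  assert (E : forall j, cpow 1 j = 1) by (induction j0; simpl; auto; rewrite IHj0; ring).
  rewrite E. ring.
Qed.

Lemma subpow m (F : S1) k z :
  op_pow (op_sub rho_a op_id) m F k z = if Nat.leb m k then F (k - m)%nat z else 0.
Proof.
  revert k z. induction m; intros k z.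
  - simpl. rewrite Nat.sub_0_r. reflexivity.
  - set (P := op_pow (op_sub rho_a op_id) m F).
    change (op_pow (op_sub rho_a op_id) (S m) F k z) with (rho_a P k z - P k z).
    destruct k as [|k].
    + simpl. ring.
    + unfold rho_a. unfold P. rewrite !IHm. simpl Nat.leb. simpl (S k - S m)%nat.
      destruct (Nat.leb m k); ring.
Qed.

Lemma bpow n (F : S1) k : op_pow rho_b n F k = Cderiv_n n (F k).
Proof.
  induction n; [reflexivity|]. apply functional_extensionality; intros z.
  change (op_pow rho_b (S n) F k z) with (Cderiv (op_pow rho_b n F k) z).
  rewrite IHn. reflexivity.
Qed.

Lemma phipow n (F : S1) k z :
  op_pow rho_phi n F k z = if Nat.leb n k then cpow z n * F (k - n)%nat z else 0.
Proof.
  revert k z. induction n; intros k z.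
  - change (op_pow rho_phi 0 F k z) with (F k z). simpl Nat.leb. rewrite Nat.sub_0_r. cbn [cpow]. ring.
  - change (op_pow rho_phi (S n) F k z) with (rho_phi (op_pow rho_phi n F) k z).
    destruct k as [|k].
    + reflexivity.
    + unfold rho_phi at 1. rewrite IHn. simpl Nat.leb. simpl (S k - S n)%nat.
      destruct (Nat.leb n k); cbn [cpow]; ring.
Qed.

Lemma falling_psi m (F : S1) k (Phi0 : Fn) x :
  F k = (fun w => Phi0 x w) -> forall z, falling rho_psi m F k z = fallF opB m Phi0 x z.
Proof.
  intros HF. induction m; intros z.
  - change (falling rho_psi 0 F k z) with (F k z). rewrite HF. reflexivity.
  - change (falling rho_psi (S m) F k z) with
      (- (z * Cderiv (falling rho_psi m F k) z) - RtoC (INR m) * falling rho_psi m F k z).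
    cbn [fallF]. unfold opB.
    assert (E : falling rho_psi m F k = fun w => fallF opB m Phi0 x w)
      by (apply functional_extensionality; auto).
    rewrite E. reflexivity.
Qed.

Definition iterX n l := Nat.iter n dXl l.

Lemma Cderiv_n_sx n l y : Cderiv_n n (fun v => ev2 l v y) = fun v => ev2 (iterX n l) v y.
Proof.
  induction n; [reflexivity|]. cbn [Cderiv_n]. rewrite IHn.
  apply functional_extensionality; intros v. rewrite Cderiv_sx. reflexivity.
Qed.

Lemma Apow_eq n (g : Fn) x y : Good g -> Apow n g x y = cpow y n * Cderiv_n n (fun v => g v y) x.
Proof.
  intros [l ->]. revert x y. induction n; intros x y.
  - simpl. ring.
  - cbn [Apow]. unfold opA.
    assert (E : (fun w => Apow n (ev2 l) w y) = fun w => cpow y n * ev2 (iterX n l) w y).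
    { apply functional_extensionality; intros w. rewrite IHn, Cderiv_n_sx. reflexivity. }
    rewrite E. rewrite (Cderiv_eq _ _ (cpow y n * ev2 (dXl (iterX n l)) x y)).
    2: { apply isD_scal. apply isD_sx. }
    rewrite Cderiv_n_sx. cbn [cpow]. simpl iterX. ring.
Qed.

Lemma fallB_zero m x z : fallF opB m (fun _ _ => 0) x z = 0.
Proof.
  revert x z. induction m; intros x z; [reflexivity|].
  cbn [fallF]. change (opB (fallF opB m (fun _ _ => 0)) x z) with (-(z * Cderiv (fun w => fallF opB m (fun _ _ => 0) x w) z)).
  assert (E : (fun w => fallF opB m (fun _ _ => 0) x w) = fun _ => 0)
    by (apply functional_extensionality; auto).
  rewrite E, IHm. rewrite (Cderiv_eq _ _ 0) by apply isD_const. ring.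
Qed.

Lemma Rterm_eval (G : S2) m n N z0 z1 : (forall k, Good (G k)) ->
  Rterm m n (Pswap G) N z0 z1 =
  if Nat.leb (m + n) N then invfact n * (invfact m * Phi (G (N - n - m)%nat) m n z1 z0) else 0.
Proof.
  intros HG.
  set (Fin := fun (j : nat) (w : C) =>
     op_comp (op_pow (op_sub rho_a op_id) m) (op_pow rho_b n) (fun j' v => Pswap G j' w v) j z1).
  change (Rterm m n (Pswap G) N z0 z1) with
    (invfact n * (invfact m * falling rho_psi m (op_pow rho_phi n Fin) N z0)).
  set (Phi0 := if Nat.leb (m + n) N then Apow n (G (N - n - m)%nat) else (fun _ _ => 0)).
  rewrite (falling_psi m _ N Phi0 z1).
  2: { apply functional_extensionality; intros w. rewrite phipow. unfold Fin, op_comp.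
       rewrite subpow. rewrite bpow. unfold Phi0, Pswap.
       destruct (Nat.leb (m + n) N) eqn:E1.
       - apply Nat.leb_le in E1.
         assert (E2 : Nat.leb n N = true) by (apply Nat.leb_le; lia).
         assert (E3 : Nat.leb m (N - n) = true) by (apply Nat.leb_le; lia).
         rewrite E2, E3. rewrite Apow_eq by auto. reflexivity.
       - apply Nat.leb_gt in E1.
         destruct (Nat.leb n N) eqn:E2; [|reflexivity].
         assert (E3 : Nat.leb m (N - n) = false) by (apply Nat.leb_gt; apply Nat.leb_le in E2; lia).
         rewrite E3. ring. }
  unfold Phi0. destruct (Nat.leb (m + n) N).
  - reflexivity.
  - rewrite fallB_zero. ring.
Qed.

Definition swapl (l : list mono) : list mono :=
  map (fun m => match m with (c, a, b, u0, u1) => (c, b, a, u1, u0) end) l.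

Lemma ev2_swapl l x y : ev2 (swapl l) x y = ev2 l y x.
Proof.
  induction l as [|[[[[c a] b] u0] u1] l IH]; [reflexivity|].
  simpl. unfold ev2 in *; simpl. rewrite IH. replace (u1 * x + u0 * y) with (u0 * y + u1 * x) by ring. ring.
Qed.

Lemma Good_swap f : Good f -> Good (fun x y => f y x).
Proof. intros [l ->]. exists (swapl l). fext. rewrite ev2_swapl. reflexivity. Qed.

Lemma inA2_Good f : inA2 f -> Good f.
Proof. intros H. apply inA2_ev2 in H. destruct H as [l Hl]. exists l. fext. apply Hl. Qed.

Lemma Good_inA2 f : Good f -> inA2 f.
Proof. intros [l ->]. apply inA2_ev2. exists l. auto. Qed.

Lemma reindex (F : nat -> nat -> nat -> C) N :
  csum (fun k => csum (fun m => F m (N - k - m)%nat k) (N - k)) N =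
  csum (fun m => csum (fun n => if Nat.leb (m + n) N then F m n (N - n - m)%nat else 0) N) N.
Proof.
  rewrite (csum_ext _ (fun k => csum (fun m => if Nat.leb m (N - k) then F m (N - k - m)%nat k else 0) N)).
  2: { intros k Hk. apply csum_extend. lia. }
  rewrite csum_switch. apply csum_ext. intros m Hm.
  rewrite (csum_ext _ (fun k => if Nat.leb k (N - m) then F m (N - k - m)%nat k else 0)).
  2: { intros k Hk. destruct (Nat.leb m (N - k)) eqn:E1; destruct (Nat.leb k (N - m)) eqn:E2; auto.
       - apply Nat.leb_le in E1; apply Nat.leb_gt in E2; lia.
       - apply Nat.leb_gt in E1; apply Nat.leb_le in E2; lia. }
  rewrite (csum_ext (fun n => if Nat.leb (m + n) N then F m n (N - n - m)%nat else 0)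
                    (fun n => if Nat.leb n (N - m) then F m n (N - n - m)%nat else 0)).
  2: { intros k Hk. destruct (Nat.leb (m + k) N) eqn:E1; destruct (Nat.leb k (N - m)) eqn:E2; auto.
       - apply Nat.leb_le in E1; apply Nat.leb_gt in E2; lia.
       - apply Nat.leb_gt in E1; apply Nat.leb_le in E2; lia. }
  rewrite <- !csum_extend by lia.
  rewrite csum_rev. apply csum_ext. intros i Hi. f_equal; lia.
Qed.

Lemma GoodG (G : S2) : inA2ser G -> forall k, Good (G k).
Proof. intros H k. apply inA2_Good. apply H. Qed.

Lemma GoodPG (G : S2) : inA2ser G -> forall k, Good (Pswap G k).
Proof. intros H k. unfold Pswap. apply (Good_swap (G k)). apply GoodG; auto. Qed.

Lemma part1 (G : S2) : inA2ser G -> forall (m n N : nat), (N < m + n)%nat ->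
  forall z0 z1, Rterm m n G N z0 z1 = 0.
Proof.
  intros HG m n N HN z0 z1.
  change (Rterm m n G N z0 z1) with (Rterm m n (Pswap (Pswap G)) N z0 z1).
  rewrite Rterm_eval by (apply GoodPG; auto).
  replace (Nat.leb (m + n) N) with false by (symmetry; apply Nat.leb_gt; lia). reflexivity.
Qed.

Lemma r_op_eval (G : S2) N z0 z1 : inA2ser G ->
  r_op G N z0 z1 = csum (fun m => csum (fun n =>
     if Nat.leb (m + n) N then cc m n * Phi (G (N - n - m)%nat) m n z1 z0 else 0) N) N.
Proof.
  intros HG. unfold r_op, rhoR. rewrite csum_sum_n. apply csum_ext. intros m Hm.
  rewrite csum_sum_n. apply csum_ext. intros n Hn.
  rewrite Rterm_eval by (apply GoodG; auto).
  destruct (Nat.leb (m + n) N); [unfold cc; ring | reflexivity].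
Qed.

Lemma part2 (G : S2) : inA2ser G -> inA2ser (r_op G).
Proof.
  intros HG N. apply Good_inA2.
  set (H := fun m n (z0 z1 : C) =>
     if Nat.leb (m + n) N then cc m n * Phi (G (N - n - m)%nat) m n z1 z0 else 0).
  assert (E : r_op G N = fun z0 z1 => csum (fun m => 1 * (fun z0 z1 => csum (fun n => 1 * H m n z0 z1) N) z0 z1) N).
  { fext. rewrite r_op_eval by auto. apply csum_ext. intros m Hm. rewrite Cmult_1_l.
    apply csum_ext. intros n Hn. unfold H. ring. }
  rewrite E. apply Good_csum. intros m. apply Good_csum. intros n. unfold H.
  destruct (Nat.leb (m + n) N).
  - apply Good_scal. apply (Good_swap (Phi (G (N - n - m)%nat) m n)). apply Good_Phi. apply GoodG; auto.
  - apply Good_zero.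
Qed.

Lemma substU_eval (G : S2) N z0 z1 : inA2ser G ->
  substU G N z0 z1 = csum (fun k => csum (fun m => cc m (N - k - m)%nat * Phi (G k) m (N - k - m)%nat z1 z0) (N - k)) N.
Proof.
  intros HG. unfold substU. rewrite csum_sum_n. apply csum_ext. intros k Hk.
  unfold hser. transitivity (taylor (N - k) (fun h => G k (Xf z0 z1 h) (Yf z0 z1 h))). reflexivity.
  rewrite taylor_val by (apply GoodG; auto).
  rewrite fall_id by (apply GoodG; auto).
  rewrite Cmult_comm, Cmult_assoc.
  replace (invfact (N - k) * factC (N - k)) with (RtoC 1).
  2: { unfold invfact, factC. field. apply INR_fact_nz. }
  rewrite Cmult_1_l. reflexivity.
Qed.

Lemma part3 (G : S2) : inA2ser G -> forall N z0 z1, r_op G N z0 z1 = substU G N z0 z1.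
Proof.
  intros HG N z0 z1. rewrite r_op_eval, substU_eval by auto.
  rewrite (reindex (fun m n k => cc m n * Phi (G k) m n z1 z0) N). reflexivity.
Qed.

Lemma Cderiv_n_zero j : Cderiv_n j (fun _ => RtoC 0) = fun _ => RtoC 0.
Proof.
  induction j; [reflexivity|]. cbn [Cderiv_n]. rewrite IHj.
  apply functional_extensionality; intros z. apply Cderiv_eq. apply isD_const.
Qed.

Lemma Good_coh v : Good (coh v).
Proof. exists ((RtoC 1, 0%nat, 0%nat, fst v, snd v) :: nil). fext. unfold coh, ev2. simpl. ring. Qed.

Lemma inA2ser_cser v : inA2ser (cser (coh v)).
Proof. intros k. apply Good_inA2. destruct k; simpl. apply Good_coh. apply Good_zero. Qed.

Lemma csum_first (f : nat -> C) N : (forall k, (1 <= k)%nat -> f k = 0) -> csum f N = f O.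
Proof. intros H. induction N; [reflexivity|]. simpl. rewrite IHN, (H (S N)) by lia. ring. Qed.

Lemma part4 (v : C * C) (N : nat) (z0 z1 : C) :
  r_op (cser (coh v)) N z0 z1 = hser (fun h => coh (mv (Umat h) v)) N z0 z1.
Proof.
  rewrite part3 by apply inA2ser_cser. unfold substU. rewrite csum_sum_n.
  rewrite csum_first.
  - rewrite Nat.sub_0_r. unfold hser. f_equal. apply functional_extensionality; intros h.
    unfold coh. simpl. f_equal. ring.
  - intros k Hk. destruct k as [|k]; [lia|]. unfold hser, taylor. simpl cser.
    rewrite Cderiv_n_zero. ring.
Qed.

Open Scope C_scope.

Theorem mainTheorem6 :
  (* well-definedness: the (m,n)-term of rho^{(x)2}(R) lies in hbar^{m+n} *)
  (forall (G : S2), inA2ser G ->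
     forall (m n N : nat), (N < m + n)%nat ->
       forall z0 z1, Rterm m n G N z0 z1 = 0) /\
  (* r maps A^2[[hbar]] to A^2[[hbar]] *)
  (forall (G : S2), inA2ser G -> inA2ser (r_op G)) /\
  (* (r f)(z) = f(U^T z) *)
  (forall (G : S2), inA2ser G ->
     forall (N : nat) (z0 z1 : C), r_op G N z0 z1 = substU G N z0 z1) /\
  (* r phi_v = phi_{U v} *)
  (forall (v : C * C) (N : nat) (z0 z1 : C),
     r_op (cser (coh v)) N z0 z1 = hser (fun h => coh (mv (Umat h) v)) N z0 z1).
Proof.
  split; [exact part1|]. split; [exact part2|]. split; [exact part3|]. exact part4.
Qed.
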